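(* Let $S=\{v_1,\ldots,v_n\}\subset\mathbb Z^n$, $n\ge3$, be non-acute, and suppose there are indices $i,s,t,u$ with $E_i=\{s,t,u\}$, $\langle v_s,v_t\rangle=-1$, $\langle v_s,e_i\rangle=-\langle v_t,e_i\rangle=\pm1$, $|\langle v_u,e_i\rangle|=1$ and $\langle v_u,v_u\rangle\ge3$. Let $$S'=(S\setminus\{v_s,v_t,v_u\})\cup\{v_s+v_t,\ v_u-\langle v_u,e_i\rangle e_i\}\subset\mathbb Z^{n-1}=\langle e_1,\ldots,e_{i-1},e_{i+1},\ldots,e_n\rangle$$ be the corresponding contraction. Write $\sum_{v\in S}v=\sum_{\alpha=1}^n k_\alpha e_\alpha$ and $\sum_{v\in S'}v=\sum_{\alpha\ne i}k'_\alpha e_\alpha$, and let $R_o^S=\{\alpha: k_\alpha \text{ odd}\}$, $R_o^{S'}=\{\alpha\ne i: k'_\alpha\text{ odd}\}$. Then $$\sum_{\alpha=1}^n k_\alpha^2>4n-3|R_o^S|\quad\Longleftrightarrow\quad \sum_{\alpha\ne i}k_\alpha'^2>4(n-1)-3|R_o^{S'}|.$$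
   Context: $\mathbb Z^n$ carries the standard dot product with standard basis $e_1,\ldots,e_n$. For $S=\{v_1,\ldots,v_n\}$, $E_j=\{\alpha:\langle v_\alpha,e_j\rangle\ne0\}$. $S$ is non-acute if $a_\alpha:=\langle v_\alpha,v_\alpha\rangle\ge1$ for all $\alpha$, $\langle v_\alpha,v_\beta\rangle\le0$ for $\alpha\ne\beta$, and $a_\alpha\ge-\sum_{\beta\ne\alpha}\langle v_\beta,v_\alpha\rangle$ for all $\alpha$. The inequality $\sum k_\alpha^2>4n-3|R_o|$ for a subset of $n$ vectors in $\mathbb Z^n$ with Wu element $\sum k_\alpha e_\alpha$ is the ''Wu obstruction''. *)

(* Defs.v *)
From mathcomp Require Import all_boot all_order all_algebra.
Set Implicit Arguments. Unset Strict Implicit. Unset Printing Implicit Defensive.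
Import Order.TTheory GRing.Theory Num.Theory.
Local Open Scope ring_scope.

Definition vecZ (n : nat) := 'I_n -> int.

Definition dotZ n (x y : vecZ n) : int := \sum_(j < n) x j * y j.

Definition eZ n (j : 'I_n) : vecZ n := fun k => (k == j)%:R.

Definition Eset n (v : 'I_n -> vecZ n) (j : 'I_n) : {set 'I_n} :=
  [set a | dotZ (v a) (eZ j) != 0].

Definition non_acute n (v : 'I_n -> vecZ n) : Prop :=
  [/\ forall a, 1 <= dotZ (v a) (v a),
      forall a b, a != b -> dotZ (v a) (v b) <= 0
    & forall a, dotZ (v a) (v a) >= - \sum_(b < n | b != a) dotZ (v b) (v a)].

(* the contraction S' : a list of vectors lying in the sublattice
   Z^{n-1} = <e_j : j <> i> of Z^n *)
Definition contraction n (v : 'I_n -> vecZ n) (i s t u : 'I_n) : seq (vecZ n) :=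
  [seq v a | a <- enum 'I_n & a \notin [set s; t; u]] ++
  [:: (fun k => v s k + v t k);
      (fun k => v u k - dotZ (v u) (eZ i) * eZ i k)].

Definition wu_coef n (S : seq (vecZ n)) (alpha : 'I_n) : int :=
  \sum_(w <- S) dotZ w (eZ alpha).

Definition oddZ (k : int) : bool := odd `|k|%N.

(* Main.v *)
Require Import Defs.
From mathcomp Require Import all_boot all_order all_algebra.
From mathcomp Require Import zify.
Import Order.TTheory GRing.Theory Num.Theory.
Local Open Scope ring_scope.

Lemma dot_e n (w : vecZ n) j : dotZ w (eZ j) = w j.
Proof.
rewrite /dotZ (bigD1 j) //= big1 ?addr0 /eZ ?eqxx ?mulr1 //.
by move=> k /negPf ->; rewrite mulr0.
Qed.

Lemma split3 n (f : 'I_n -> int) s t u : s != t -> s != u -> t != u ->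
  \sum_a f a = \sum_(a | a \notin [set s; t; u]) f a + (f s + f t + f u).
Proof.
move=> st su tu.
rewrite (bigID (fun a => a \in [set s; t; u])) /= addrC; congr (_ + _).
rewrite (bigD1 s) ?inE ?eqxx //= (bigD1 t); last by rewrite !inE eqxx !orbT /= eq_sym st.
rewrite (bigD1 u); last by rewrite !inE eqxx !orbT /= (eq_sym u s) su (eq_sym u t) tu.
rewrite big1.
  by change (f s + (f t + (f u + 0)) = f s + f t + f u); rewrite addr0 !addrA.
move=> a; rewrite !inE.
by case: (a =P s); case: (a =P t); case: (a =P u).
Qed.

Lemma wuS n (v : 'I_n -> vecZ n) alpha :
  wu_coef [seq v a | a <- enum 'I_n] alpha = \sum_a v a alpha.
Proof.
rewrite /wu_coef big_map enumT -[Finite.enum _]/(index_enum _).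
by apply: eq_bigr => a _; rewrite dot_e.
Qed.

Lemma wuS' n (v : 'I_n -> vecZ n) i s t u alpha :
  wu_coef (contraction v i s t u) alpha =
  \sum_(a | a \notin [set s; t; u]) v a alpha +
    ((v s alpha + v t alpha) + (v u alpha - v u i * eZ i alpha)).
Proof.
rewrite /wu_coef /contraction big_cat /= big_map big_filter enumT -[Finite.enum _]/(index_enum _).
rewrite !big_cons big_nil addr0 !dot_e; congr (_ + _).
by apply: eq_bigr => a _; rewrite dot_e.
Qed.

Theorem lemma1p9 (n : nat) (v : 'I_n -> vecZ n) (i s t u : 'I_n) :
  (3 <= n)%N ->
  non_acute v ->
  s != t -> s != u -> t != u ->
  Eset v i = [set s; t; u] ->
  dotZ (v s) (v t) = -1 ->
  (dotZ (v s) (eZ i) = 1 /\ - dotZ (v t) (eZ i) = 1 \/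
   dotZ (v s) (eZ i) = -1 /\ - dotZ (v t) (eZ i) = -1) ->
  `|dotZ (v u) (eZ i)| = 1 ->
  3 <= dotZ (v u) (v u) ->
  let S := [seq v a | a <- enum 'I_n] in
  let S' := contraction v i s t u in
  let k := wu_coef S in
  let k' := wu_coef S' in
  (\sum_(alpha < n) k alpha ^+ 2
     > 4 * n%:Z - 3 * #|[set alpha : 'I_n | oddZ (k alpha)]|%:Z)
  <->
  (\sum_(alpha < n | alpha != i) k' alpha ^+ 2
     > 4 * (n%:Z - 1) - 3 * #|[set alpha : 'I_n | (alpha != i) && oddZ (k' alpha)]|%:Z).
Proof.
move=> _ _ st su tu hE _ hst hu _ S S' k k'.
rewrite !dot_e in hst hu.
have kk' : forall alpha, alpha != i -> k' alpha = k alpha.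
  move=> alpha ne; rewrite /k' /k wuS wuS' (split3 _ _ _ _ _ st su tu).
  by rewrite /eZ (negPf ne) mulr0 subr0 addrA.
have ki : k i = v u i.
  rewrite /k wuS (split3 _ _ _ _ _ st su tu) big1.
    by case: hst => [[a b]|[a b]]; lia.
  move=> a ha; apply/eqP; move: ha; rewrite -hE inE dot_e.
  by case: eqP.
have ki2 : k i ^+ 2 = 1 by rewrite ki -real_normK ?num_real // hu expr1n.
have oi : oddZ (k i).
  have h : Posz `|v u i|%N = 1 by rewrite abszE hu.
  by rewrite /oddZ ki; case: h => ->.
have hsum : \sum_(alpha < n) k alpha ^+ 2 =
    1 + \sum_(alpha < n | alpha != i) k' alpha ^+ 2.
  rewrite (bigD1 i) //= ki2; congr (_ + _).
  by apply: eq_bigr => a ne; rewrite kk'.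
have hset : [set alpha : 'I_n | oddZ (k alpha)] =
    i |: [set alpha : 'I_n | (alpha != i) && oddZ (k' alpha)].
  apply/setP => a; rewrite !inE.
  case: (a =P i) => [-> //|/eqP ne] /=; by rewrite kk'.
have hcard : #|[set alpha : 'I_n | oddZ (k alpha)]| =
    (#|[set alpha : 'I_n | (alpha != i) && oddZ (k' alpha)]|).+1.
  by rewrite hset cardsU1 inE eqxx.
rewrite hsum hcard.
set A := \sum_(_ < n | _) _. set c := #|_|.
lia.
Qed.
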